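(* Let $m,n\ge 1$ and $k\ge 2$ be integers. The linear map $\psi_{m,k}:V_{m,k}\to\mathbb{R}^N$ is an isomorphism of real vector spaces.
   Context: $mB^n=\{0,1,\ldots,m\}^n$. For an integer $k\ge 2$, a polynomial $P\in\mathbb{R}[x_1,\ldots,x_n]$ is called $(m,k)$-reduced if two conditions hold: $\deg P\le mn+(m+1)(k-1)-1$, and no monomial of $P$ is divisible by $x_{i_1}^{m+1}\cdots x_{i_k}^{m+1}$ for any indices $i_1,\ldots,i_k$ (not necessarily distinct). $V_{m,k}$ is the space of all $(m,k)$-reduced polynomials. $M_k(n)=\binom{n+k-1}{n}$ and $N=\big((m+1)^n-1\big)M_k(n)+M_{k-1}(n)$. The map $\psi_{m,k}$ sends $P\in V_{m,k}$ to the $N$-tuple listing, in a fixed order, two groups of values: - the values at every point of $mB^n\setminus\{\mathbf 0\}$ of all partial derivatives $\partial^{j_1+\cdots+j_n}P/\partial x_1^{j_1}\cdots\partial x_n^{j_n}$ with $j_1+\cdots+j_n<k$; - the values at $\mathbf 0$ of all such partial derivatives with $j_1+\cdots+j_n<k-1$. *)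

(* Defs.v *)
From HB Require Import structures.
From mathcomp Require Import all_boot all_order all_algebra.
From mathcomp Require Import reals.
From mathcomp Require Import mpoly.

Set Implicit Arguments.
Unset Strict Implicit.
Unset Printing Implicit Defensive.

Import Order.TTheory GRing.Theory Num.Theory.
Local Open Scope ring_scope.

Section Reduced.
Variables (R : realType) (n m k : nat).

(* The degree bound  m n + (m+1)(k-1) - 1  (natural-number arithmetic;
   for k >= 2 the subtraction is exact). *)
Definition deg_bound : nat := (m * n + m.+1 * (k - 1) - 1)%N.

(* A monomial x^a is divisible by x_{i1}^{m+1} ... x_{ik}^{m+1} for some
   (not necessarily distinct) indices i1..ik. *)
Definition mono_divisible (a : 'X_{1..n}) : Prop :=
  exists s : k.-tuple 'I_n,
    forall i : 'I_n, (count_mem i s * m.+1 <= a i)%N.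

Definition reduced (P : {mpoly R[n]}) : Prop :=
  (forall a, a \in msupp P -> (mdeg a <= deg_bound)%N) /\
  (forall a, a \in msupp P -> ~ mono_divisible a).

Definition point := {ffun 'I_n -> 'I_m.+1}.
Definition origin : point := [ffun => ord0].
Definition realpt (x : point) : 'I_n -> R := fun i => (x i : nat)%:R.

Definition midx := 'X_{1..n < k}.

Definition psi_dom : {set point * midx} :=
  [set t | (t.1 != origin) || (mdeg (bmnm t.2) < k.-1)%N].

Definition psi (P : {mpoly R[n]}) (t : point * midx) : R :=
  (mderivm (bmnm t.2) P).@[realpt t.1].

Definition Mk (kk : nat) : nat := 'C(n + kk - 1, n).
Definition Nsize : nat := (((m.+1 ^ n) - 1) * Mk k + Mk k.-1)%N.

End Reduced.
Arguments psi {R n} m k P t.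
Arguments reduced {R n} m k P.
Arguments psi_dom n m k.
Arguments Nsize n m k.

(* Main.v *)
Require Import Defs.
From HB Require Import structures.
From mathcomp Require Import all_boot all_order all_algebra.
From mathcomp Require Import reals.
From mathcomp Require Import mpoly.
From mathcomp Require Import zify.
Import GRing.Theory Num.Theory.
Local Open Scope ring_scope.

Set Implicit Arguments.
Unset Strict Implicit.
Unset Printing Implicit Defensive.


Section Square.
Variable (F : fieldType) (I : finType).

Lemma sumI_enum (G : I -> F) : \sum_(j : I) G j = \sum_(b < #|I|) G (enum_val b).
Proof. by rewrite (big_enum_val (A := I)). Qed.

Definition sqmx (A : I -> I -> F) : 'M[F]_#|I| :=
  \matrix_(b, a) A (enum_val a) (enum_val b).

Definition rowof (c : I -> F) : 'rV[F]_#|I| := \row_b c (enum_val b).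

Lemma sqmxE (A : I -> I -> F) c a :
  (rowof c *m sqmx A) 0 a = \sum_j A (enum_val a) j * c j.
Proof.
rewrite !mxE sumI_enum; apply: eq_bigr => b _; by rewrite !mxE mulrC.
Qed.

Lemma sq_inj_surj (A : I -> I -> F) :
  (forall c : I -> F, (forall i, \sum_j A i j * c j = 0) -> forall j, c j = 0) ->
  forall f : I -> F, exists c : I -> F, forall i, \sum_j A i j * c j = f i.
Proof.
move=> inj f.
have fr : row_free (sqmx A).
  apply/negPn/negP; rewrite -kermx_eq0 => /rowV0Pn [v /submxP [D ->] nz].
  case/negP: nz; set w := D *m kermx (sqmx A).
  have vS : w *m sqmx A = 0 by rewrite /w -mulmxA mulmx_ker mulmx0.
  pose c := fun j : I => w 0 (enum_rank j).
  have rc : rowof c = w by apply/rowP => b'; rewrite mxE /c enum_valK.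
  have c0 : forall j, c j = 0.
    by apply: inj => i; rewrite -[i]enum_rankK -sqmxE rc vS mxE.
  apply/eqP/rowP => b; have := c0 (enum_val b); rewrite /c enum_valK => ->; by rewrite mxE.
have un : sqmx A \in unitmx by rewrite -row_free_unit.
pose c := fun j => (rowof f *m invmx (sqmx A)) 0 (enum_rank j).
have rc : rowof c = rowof f *m invmx (sqmx A).
  by apply/rowP => b; rewrite mxE /c enum_valK.
exists c => i.
by rewrite -[i]enum_rankK -sqmxE rc mulmxKV // mxE enum_rankK.
Qed.

Lemma sq_surj_inj (A : I -> I -> F) :
  (forall f : I -> F, exists c : I -> F, forall i, \sum_j A i j * c j = f i) ->
  (forall c : I -> F, (forall i, \sum_j A i j * c j = 0) -> forall j, c j = 0).
Proof.
move=> surj c hc j.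
have pre : forall b : 'I_#|I|, exists r : 'rV[F]_#|I|, r *m sqmx A == delta_mx 0 b.
  move=> b; have [c' hc'] := surj (fun i => (enum_rank i == b)%:R).
  exists (rowof c'); apply/eqP/rowP => a; rewrite sqmxE hc' !mxE enum_valK.
  by rewrite eqxx /= eq_sym.
pose B := \matrix_(b, a) (xchoose (pre b)) 0 a.
have B1 : B *m sqmx A = 1%:M.
  apply/matrixP => b a; rewrite !mxE.
  have -> : \sum_j B b j * sqmx A j a = (xchoose (pre b) *m sqmx A) 0 a.
    by rewrite !mxE; apply: eq_bigr => l _; rewrite mxE.
  by rewrite (eqP (xchooseP (pre b))) !mxE eqxx /= eq_sym.
have [un _] := mulmx1_unit B1.
have un' : sqmx A \in unitmx by have [] := mulmx1_unit (mulmx1C B1).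
have r0 : rowof c *m sqmx A = 0.
  by apply/rowP => a; rewrite sqmxE hc mxE.
have : rowof c = 0 by rewrite -(mulmxK un' (rowof c)) r0 mul0mx.
move/rowP/(_ (enum_rank j)); by rewrite !mxE enum_rankK.
Qed.

End Square.

Section SquareD.
Variable (F : fieldType) (T : finType) (D : {pred T}).

Lemma sqD_inj_surj (A : T -> T -> F) :
  (forall c : T -> F, (forall i, i \in D -> \sum_(j in D) A i j * c j = 0) ->
     forall j, j \in D -> c j = 0) ->
  forall f : T -> F, exists c : T -> F, forall i, i \in D -> \sum_(j in D) A i j * c j = f i.
Proof.
move=> inj f.
pose I := {x : T | x \in D}.
have H1 : forall c : I -> F,
    (forall i : I, \sum_j A (val i) (val j) * c j = 0) -> forall j, c j = 0.
  move=> c hc v.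
  pose c' := fun t : T => if insub t is Some u then c u else 0.
  have cc : forall u : I, c u = c' (val u) by move=> u; rewrite /c' valK.
  rewrite cc; apply: inj; last by apply: valP.
  move=> i iD; rewrite big_sub; rewrite -[RHS](hc (Sub i iD)).
  by apply: eq_bigr => u _; rewrite cc.
have [c hc] := sq_inj_surj H1 (fun u => f (val u)).
exists (fun t => if insub t is Some u then c u else 0) => i iD.
rewrite big_sub; have := hc (Sub i iD); rewrite SubK => <-.
by apply: eq_bigr => u _; rewrite valK.
Qed.

Lemma sqD_surj_inj (A : T -> T -> F) :
  (forall f : T -> F, exists c : T -> F, forall i, i \in D -> \sum_(j in D) A i j * c j = f i) ->
  (forall c : T -> F, (forall i, i \in D -> \sum_(j in D) A i j * c j = 0) ->
     forall j, j \in D -> c j = 0).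
Proof.
move=> surj c hc j jD.
pose I := {x : T | x \in D}.
have := @sq_surj_inj F I (fun u v => A (val u) (val v)) _ (fun u => c (val u)) _ (Sub j jD).
apply=> [g|u].
  have [c' hc'] := surj (fun t => if insub t is Some u then g u else 0).
  exists (fun u => c' (val u)) => u; have := hc' (val u) (valP u).
  by rewrite valK big_sub => <-.
by rewrite -(big_sub D (fun t => A (val u) t * c t)); apply: hc; apply: valP.
Qed.

End SquareD.

Section Lag.
Variables (R : realType) (m : nat).

Definition rs (a : 'I_m.+1) : seq R :=
  map (fun b : 'I_m.+1 => ((b : nat)%:R : R)) (enum (predC1 a)).

Lemma size_rs a : size (rs a) = m.
Proof. by rewrite size_map -cardE cardC1 card_ord. Qed.

Definition lagc (a : 'I_m.+1) : R := (\prod_(z <- rs a) ((a : nat)%:R - z))^-1.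
Definition lag (a : 'I_m.+1) : {poly R} :=
  lagc a *: \prod_(z <- rs a) ('X - z%:P).

Lemma size_lag a : (size (lag a) <= m.+1)%N.
Proof.
by apply: leq_trans (size_scale_leq _ _) _; rewrite size_prod_XsubC size_rs.
Qed.

Lemma prod_rs_neq0 a : \prod_(z <- rs a) ((a : nat)%:R - z) != 0.
Proof.
rewrite prodf_seq_neq0; apply/allP => z /mapP [b]; rewrite mem_enum => /= hb ->.
by rewrite subr_eq0 eqr_nat eq_sym.
Qed.

Lemma lagc_neq0 a : lagc a != 0.
Proof. by rewrite invr_eq0 prod_rs_neq0. Qed.

Lemma lag_eval a (c : 'I_m.+1) : (lag a).[(c : nat)%:R] = (c == a)%:R.
Proof.
rewrite hornerZ horner_prod.
under eq_bigr do rewrite hornerXsubC.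
case: (eqVneq c a) => [->|ne].
  by rewrite mulVf // prod_rs_neq0.
apply/eqP; rewrite mulf_eq0; apply/orP; right; apply/eqP.
apply/eqP; apply: negbNE; rewrite prodf_seq_neq0; apply/negP => /allP /(_ (c%:R)).
have -> : (c : nat)%:R \in rs a by apply: map_f; rewrite mem_enum /= inE ne.
by move=> /(_ isT) /=; rewrite subrr eqxx.
Qed.

Lemma lag_top a : (lag a)`_m = lagc a.
Proof.
rewrite coefZ.
have := lead_coef_prod_XsubC (rs a) predT id; rewrite lead_coefE size_prod_XsubC size_rs /=.
by move=> ->; rewrite mulr1.
Qed.

End Lag.

Section Grid.
Variables (R : realType) (n m : nat).

Definition Vg (t r : point n m) : R := \prod_i ((t i : nat)%:R) ^+ (r i).
Definition Bc (r x : point n m) : R := \prod_i (lag R (x i))`_(r i).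
Definition top : point n m := [ffun => ord_max].

Lemma VB t x : \sum_r Vg t r * Bc r x = (t == x)%:R.
Proof.
under eq_bigr do rewrite /Vg /Bc -big_split /=.
rewrite -(bigA_distr_bigA (fun i (u : 'I_m.+1) => ((t i : nat)%:R) ^+ u * (lag R (x i))`_u)).
under eq_bigr => i _.
  rewrite (eq_bigr (fun u : 'I_m.+1 => (lag R (x i))`_u * ((t i : nat)%:R) ^+ u)); last by move=> u _; rewrite mulrC.
  rewrite -(horner_coef_wide _ (size_lag R (x i))) lag_eval.
  over.
case: (eqVneq t x) => [->|ne].
  by rewrite big1 // => i _; rewrite eqxx.
have [i hi] : exists i, t i != x i.
  apply/existsP; apply: contraR ne => /existsPn h; apply/eqP/ffunP => i.
  by have := h i; rewrite negbK => /eqP.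
by rewrite (bigD1 i) //= (negbTE hi) mul0r.
Qed.

Lemma grid_surj (f : point n m -> R) :
  exists c : point n m -> R, forall t, \sum_r Vg t r * c r = f t.
Proof.
exists (fun r => \sum_x Bc r x * f x) => t.
under eq_bigr do rewrite mulr_sumr.
rewrite exchange_big /=.
under eq_bigr do (under eq_bigr do rewrite mulrA; rewrite -mulr_suml VB).
rewrite (bigD1 t) //= eqxx mul1r big1 ?addr0 // => x hx.
by rewrite eq_sym (negbTE hx) mul0r.
Qed.

Lemma grid_inj (d : point n m -> R) :
  (forall t, \sum_r Vg t r * d r = 0) -> forall r, d r = 0.
Proof. exact: (sq_surj_inj grid_surj). Qed.

Lemma Bc_top : Bc top (origin n m) != 0.
Proof.
rewrite /Bc prodf_seq_neq0; apply/allP => i _ /=.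
by rewrite !ffunE /= lag_top lagc_neq0.
Qed.

Lemma grid_inj2 (d : point n m -> R) : d top = 0 ->
  (forall t, t != origin n m -> \sum_r Vg t r * d r = 0) -> forall r, d r = 0.
Proof.
move=> dtop h.
pose v0 := \sum_r Vg (origin n m) r * d r.
have e0 := grid_inj (d := fun r => d r - v0 * Bc r (origin n m)).
have e0' : forall r, d r = v0 * Bc r (origin n m).
  move=> r; apply/eqP; rewrite -subr_eq0; apply/eqP; apply: e0 => t.
  under eq_bigr do rewrite mulrBr.
  rewrite sumrB.
  under [X in _ - X]eq_bigr do rewrite mulrCA.
  rewrite -mulr_sumr VB.
  case: (eqVneq t (origin n m)) => [->|ne]; first by rewrite mulr1 subrr.
  by rewrite mulr0 subr0 h.
have v00 : v0 = 0.
  by move: dtop; rewrite e0' => /eqP; rewrite mulf_eq0 (negbTE Bc_top) orbF => /eqP.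
by move=> r; rewrite e0' v00 mul0r.
Qed.

End Grid.

Section Gbasis.
Variables (R : realType) (n m : nat).
Notation P := {mpoly R[n]}.

Definition gg (i : 'I_n) : P := \prod_(a < m.+1) ('X_i - ((a : nat)%:R)%:MP).
Definition GG (q : 'X_{1..n}) : P := \prod_i (gg i) ^+ (q i).

Definition cst0 (j : 'I_n) (p : P) := mderiv j p = 0.

Lemma cst0M j p q : cst0 j p -> cst0 j q -> cst0 j (p * q).
Proof. by rewrite /cst0 mderivM => -> ->; rewrite mul0r mulr0 addr0. Qed.

Lemma cst01 j : cst0 j 1.
Proof. by rewrite /cst0 -mpolyC1 mderivC. Qed.

Lemma cst0X j p e : cst0 j p -> cst0 j (p ^+ e).
Proof.
move=> h; elim: e => [|e ih]; first by rewrite expr0; exact: cst01.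
by rewrite exprS; apply: cst0M.
Qed.

Lemma cst0_lin i j (c : R) : i != j -> cst0 j ('X_i - c%:MP).
Proof.
move=> ne; rewrite /cst0 mderivB mderivC subr0.
by rewrite mderivX mnm1E (negbTE ne) scale0r.
Qed.

Lemma cst0_gg i j : i != j -> cst0 j (gg i).
Proof.
move=> ne; rewrite /gg; apply: (big_ind (cst0 j)); first exact: cst01.
  exact: cst0M.
by move=> a _; apply: cst0_lin.
Qed.

Lemma mderiv_exp i (p : P) e :
  mderiv i (p ^+ e.+1) = e.+1%:R *: (p ^+ e * mderiv i p).
Proof.
elim: e => [|e ih]; first by rewrite expr1 expr0 mul1r scale1r.
rewrite exprS mderivM ih -scalerAr mulrA -exprS mulrC -[in RHS](addn1 e.+1) natrD.
by rewrite scalerDl scale1r addrC.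
Qed.

Definition HH i (q : 'X_{1..n}) : P := \prod_(l | l != i) (gg l) ^+ (q l).

Lemma GG_split i q : GG q = gg i ^+ (q i) * HH i q.
Proof. by rewrite /GG (bigD1 i). Qed.

Lemma cst0_HH i q : cst0 i (HH i q).
Proof.
apply: (big_ind (cst0 i)); [exact: cst01 | exact: cst0M |].
by move=> l hl; apply: cst0X; apply: cst0_gg.
Qed.

Lemma HH_sub i q : HH i (q - U_(i))%MM = HH i q.
Proof.
by apply: eq_bigr => l hl; rewrite mnmBE mnm1E eq_sym (negbTE hl) subn0.
Qed.

Lemma GG_step i (b : 'X_{1..n}) (Q : P) :
  mderiv i (GG b * Q) = GG (b - U_(i))%MM *
    (if (0 < b i)%N then (b i)%:R *: (mderiv i (gg i) * Q) + gg i * mderiv i Q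
     else mderiv i Q).
Proof.
rewrite !(GG_split i) HH_sub mnmBE mnm1E eqxx.
case: (b i) => [|s] /=.
  rewrite !expr0 !mul1r mderivM cst0_HH mul0r add0r.
  by [].
rewrite subn1 /= -mulrA mderivM mderiv_exp mderivM cst0_HH mul0r add0r.
rewrite mulrDr; congr (_ + _).
  rewrite -!scalerAl -!scalerAr; congr (_ *: _).
  by rewrite -!mulrA; congr (_ * _); rewrite mulrCA.
by rewrite exprSr -!mulrA; congr (_ * _); rewrite mulrCA.
Qed.


Definition Ig (E : P) := exists Es : 'I_n -> P, E = \sum_i gg i * Es i.

Lemma Ig0 : Ig 0.
Proof. by exists (fun=> 0); rewrite big1 // => i _; rewrite mulr0. Qed.

Lemma IgD E1 E2 : Ig E1 -> Ig E2 -> Ig (E1 + E2).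
Proof.
move=> [E1s ->] [E2s ->]; exists (fun i => E1s i + E2s i).
by rewrite -big_split /=; apply: eq_bigr => i _; rewrite mulrDr.
Qed.

Lemma IgM p E : Ig E -> Ig (p * E).
Proof.
move=> [Es ->]; exists (fun i => p * Es i).
by rewrite mulr_sumr; apply: eq_bigr => i _; rewrite mulrCA.
Qed.

Lemma IgZ (c : R) E : Ig E -> Ig (c *: E).
Proof. by move=> h; rewrite -mul_mpolyC; apply: IgM. Qed.

Lemma Ig_gg i X : Ig (gg i * X).
Proof.
exists (fun l => if l == i then X else 0).
rewrite (bigD1 i) //= eqxx big1 ?addr0 // => l hl.
by rewrite (negbTE hl) mulr0.
Qed.

Lemma gg_eval i (t : point n m) : (gg i).@[realpt R t] = 0.
Proof.
rewrite /gg rmorph_prod (bigD1 (t i)) //= mevalB mevalC mevalXU /realpt.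
by rewrite subrr mul0r.
Qed.

Lemma Ig_eval E (t : point n m) : Ig E -> E.@[realpt R t] = 0.
Proof.
move=> [Es ->]; rewrite raddf_sum big1 // => i _.
by rewrite /= mevalM gg_eval mul0r.
Qed.

Lemma GG_eval q (t : point n m) : q != 0%MM -> (GG q).@[realpt R t] = 0.
Proof.
move=> nz; have [i hi] : exists i, (0 < q i)%N.
  apply/existsP; apply: contraR nz => /existsPn h; apply/eqP/mnmP => i.
  by have := h i; rewrite mnm0E lt0n negbK => /eqP.
rewrite /GG rmorph_prod (bigD1 i) //= rmorphXn /= gg_eval expr0n.
by rewrite eqn0Ngt hi mul0r.
Qed.

Lemma GG0 : GG 0%MM = 1.
Proof. by rewrite /GG big1 // => i _; rewrite mnm0E expr0. Qed.

Lemma dgg_eval i (t : point n m) : (mderiv i (gg i)).@[realpt R t] != 0.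
Proof.
rewrite /gg (bigD1 (t i)) //= mderivM mevalD !mevalM mevalB mevalC mevalXU /realpt.
rewrite subrr mul0r addr0 mderivB mderivC subr0 mderivX mnm1E eqxx.
have -> : (U_(i) - U_(i))%MM = 0%MM by apply/mnmP => l; rewrite mnmBE subnn mnm0E.
rewrite mpolyX0 scale1r meval1 mul1r rmorph_prod prodf_seq_neq0.
apply/allP => a _; apply/implyP => ha.
by rewrite /= mevalB mevalC mevalXU subr_eq0 eqr_nat eq_sym.
Qed.

Definition cnt (s : seq 'I_n) : 'X_{1..n} := [multinom (count_mem i s) | i < n].

Lemma deriv_G s q : exists F : P, (forall t : point n m, F.@[realpt R t] != 0) /\
  forall h : P, exists Q E : P,
    foldr (fun i p => mderiv i p) (GG q * h) s = GG (q - cnt s)%MM * Q /\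
    ((forall i, count_mem i s <= q i)%N -> Q = F * h + E /\ Ig E).
Proof.
elim: s => [|i s [F [HF IH]]].
  exists 1; split=> [t|h]; first by rewrite meval1 oner_eq0.
  exists h, 0; split.
    have -> : (q - cnt [::])%MM = q by apply/mnmP => l; rewrite mnmBE mnmE subn0.
    by [].
  by move=> _; split; [rewrite mul1r addr0 | exact: Ig0].
set b := (q - cnt s)%MM.
exists (if (0 < b i)%N then (b i)%:R *: (mderiv i (gg i) * F) else F); split.
  move=> t; case: ifP => // hb.
  rewrite mevalZ mevalM !mulf_neq0 ?HF ?dgg_eval //.
  by rewrite pnatr_eq0 -lt0n hb.
move=> h; have [Q [E [e1 e2]]] := IH h.
exists (if (0 < b i)%N then (b i)%:R *: (mderiv i (gg i) * Q) + gg i * mderiv i Q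
     else mderiv i Q).
exists ((b i)%:R *: (mderiv i (gg i) * E) + gg i * mderiv i Q).
split.
  rewrite /= e1 GG_step; congr (GG _ * _).
  by apply/mnmP => l; rewrite !mnmBE !mnmE /= -subnDA addnC.
move=> hc.
have hc' : forall l, (count_mem l s <= q l)%N.
  by move=> l; apply: leq_trans (hc l); rewrite /= leq_addl.
have hb : (0 < b i)%N.
  by rewrite /b mnmBE mnmE subn_gt0; have := hc i; rewrite /= eqxx.
rewrite hb; have [-> IgE] := e2 hc'; split; last first.
  by apply: IgD; [apply: IgZ; apply: IgM | exact: Ig_gg].
rewrite mulrDr scalerDr -addrA; congr (_ + _).
by rewrite -scalerAl mulrA.
Qed.

Lemma count_seqj (j : 'X_{1..n}) i :
  count_mem i (flatten [seq nseq (j l) l | l <- enum 'I_n]) = j i.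
Proof.
rewrite count_flatten -map_comp sumnE big_map.
under eq_bigr do rewrite /= count_nseq.
rewrite big_enum /= (bigD1 i) //= eqxx mul1n big1 ?addn0 // => l hl.
by rewrite /= (negbTE hl).
Qed.

Lemma deriv_Gm (j q : 'X_{1..n}) : exists F : P,
  (forall t : point n m, F.@[realpt R t] != 0) /\
  forall h : P, exists Q E : P,
    mderivm j (GG q * h) = GG (q - j)%MM * Q /\
    ((forall i, j i <= q i)%N -> Q = F * h + E /\ Ig E).
Proof.
have [F [HF H]] := deriv_G (flatten [seq nseq (j l) l | l <- enum 'I_n]) q.
exists F; split => // h; have [Q [E [e1 e2]]] := H h.
exists Q, E; split.
  rewrite mderivm_foldr /= e1; congr (GG _ * _); congr (_ - _)%MM.
  by apply/mnmP => l; rewrite mnmE count_seqj.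
by move=> hj; apply: e2 => i; rewrite count_seqj.
Qed.

Lemma derivG_zero (j q : 'X_{1..n}) h (t : point n m) :
  ~~ [forall i, q i <= j i]%N -> (mderivm j (GG q * h)).@[realpt R t] = 0.
Proof.
move=> nle; have [F [_ H]] := deriv_Gm j q; have [Q [E [-> _]]] := H h.
rewrite mevalM GG_eval ?mul0r //; apply: contra nle => /eqP e.
apply/forallP => i; have := congr1 (fun x : 'X_{1..n} => x i) e.
by rewrite /= mnmBE mnm0E => /eqP; rewrite subn_eq0.
Qed.

Lemma derivG_diag (q : 'X_{1..n}) : exists F : P,
  (forall t : point n m, F.@[realpt R t] != 0) /\
  forall h (t : point n m), (mderivm q (GG q * h)).@[realpt R t] =
     F.@[realpt R t] * h.@[realpt R t].
Proof.
have [F [HF H]] := deriv_Gm q q; exists F; split => // h t.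
have [Q [E [-> e2]]] := H h; have [-> IgE] := e2 (fun i => leqnn _).
have -> : (q - q)%MM = 0%MM by apply/mnmP => l; rewrite mnmBE subnn mnm0E.
by rewrite GG0 mul1r mevalD mevalM (Ig_eval _ IgE) addr0.
Qed.
End Gbasis.

Section Main.
Variables (R : realType) (n m k : nat).
Local Notation T := (point n m * midx n k)%type.
Local Notation D := (psi_dom n m k).
Local Notation P := {mpoly R[n]}.

Definition sw (x : point n m) : point n m :=
  if x == origin n m then top n m else if x == top n m then origin n m else x.

Lemma swK : involutive sw.
Proof.
move=> x; rewrite /sw.
case: (eqVneq x (origin n m)) => [->|xo].
  by case: (eqVneq (top n m) (origin n m)) => [->|]; rewrite ?eqxx.
case: (eqVneq x (top n m)) => [->|xt]; first by rewrite eqxx.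
by rewrite (negbTE xo) (negbTE xt).
Qed.

Lemma sw_top : sw (top n m) = origin n m.
Proof. by rewrite /sw; case: eqVneq => [->|]; rewrite ?eqxx. Qed.

Definition mono (r : point n m) : 'X_{1..n} := [multinom (r i : nat) | i < n].

Definition bas (u : T) : P := GG R m (bmnm u.2) * 'X_[mono (sw u.1)].

Lemma Vg_mono (y r : point n m) : ('X_[mono r] : P).@[realpt R y] = Vg R y r.
Proof. by rewrite mevalX; apply: eq_bigr => i _; rewrite mnmE. Qed.

Lemma mnm_le_eq (a b : 'X_{1..n}) :
  (forall i, a i <= b i)%N -> (mdeg b <= mdeg a)%N -> a = b.
Proof.
move=> le lem; apply/mnmP => i; apply/eqP; rewrite eqn_leq le /=.
apply/negP => /negP; rewrite -ltnNge => lt.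
move: lem; rewrite !mdegE (bigD1 i) //= [X in (_ <= X)%N](bigD1 i) //=.
have : (\sum_(l | l != i) a l <= \sum_(l | l != i) b l)%N by apply: leq_sum => l _.
move: lt; rewrite /= => lt1 lt2 lt3.
have := leq_add lt1 lt2; rewrite addSn => /leq_trans /(_ lt3).
by rewrite ltnn.
Qed.

Lemma sum_sw (G : T -> R) (j0 : midx n k) :
  \sum_(u in D | u.2 == j0) G u =
  \sum_r (if (sw r, j0) \in D then G (sw r, j0) else 0).
Proof.
rewrite big_mkcond /=.
transitivity (\sum_(x : point n m) \sum_(j : midx n k)
   (if ((x, j) \in D) && (j == j0) then G (x, j) else 0)).
  by rewrite pair_bigA /=; apply: eq_bigr => -[x j] _.
rewrite (reindex_inj (inv_inj swK)) /=; apply: eq_bigr => r _.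
rewrite (bigD1 j0) //= eqxx andbT big1 ?addr0 // => j hj.
by rewrite (negbTE hj) andbF.
Qed.

Lemma phi_inj (c : T -> R) :
  (forall v, v \in D -> \sum_(u in D) psi m k (bas u) v * c u = 0) ->
  forall u, u \in D -> c u = 0.
Proof.
move=> hc u1 u1D; apply/eqP; apply/negPn/negP => cu1.
pose S := [pred u : T | (u \in D) && (c u != 0)].
have Su1 : S u1 by rewrite /S /= u1D cu1.
case: (arg_minnP (fun u : T => mdeg (bmnm u.2)) Su1) => [[x0 j0]] /andP [u0D cu0] u0min.
have [F [HF HFd]] := derivG_diag R m (bmnm j0).
pose d := fun r : point n m => if (sw r, j0) \in D then c (sw r, j0) else 0.
have key : forall y, (y, j0) \in D -> \sum_r Vg R y r * d r = 0.
  move=> y yD; have := hc _ yD.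
  rewrite (bigID (fun u : T => u.2 == j0)) /=.
  rewrite [X in _ + X]big1 ?addr0; last first.
    move=> u /andP [uD ne].
    case: (eqVneq (c u) 0) => [->|cu]; first by rewrite mulr0.
    rewrite /psi /bas /= derivG_zero ?mul0r //.
    apply/negP => /forallP le.
    have : (mdeg (bmnm j0) <= mdeg (bmnm u.2))%N by apply: (u0min u); rewrite /S /= uD cu.
    move=> /(mnm_le_eq le) e; case/negP: ne; apply/eqP; exact: val_inj.
  rewrite sum_sw.
  under eq_bigr => r _.
    rewrite /psi /bas /=.
    over.
  move=> e.
  have e2 : \sum_r Vg R y r * d r * F.@[realpt R y] = 0.
    rewrite -[RHS]e; apply: eq_bigr => r _; rewrite /d; case: ifP => _; last by rewrite !mulr0 mul0r.
    by rewrite /psi /bas /= swK HFd Vg_mono mulrC mulrA.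
  move: e2; rewrite -mulr_suml => /eqP; rewrite mulf_eq0 (negbTE (HF y)) orbF.
  by under eq_bigr do rewrite /=; move/eqP.
have dx0 : d (sw x0) = c (x0, j0) by rewrite /d swK u0D.
suff : c (x0, j0) = 0 by move=> h; rewrite h eqxx in cu0.
case: (ltnP (mdeg (bmnm j0)) k.-1) => hj.
  rewrite -dx0; apply: (grid_inj (d := d)) => y; apply: key.
  by rewrite inE /= hj orbT.
have dtop : d (top n m) = 0.
  by rewrite /d sw_top inE /= eqxx /= ltnNge hj.
rewrite -dx0; apply: (grid_inj2 dtop) => y hy; apply: key.
by rewrite inE /= hy.
Qed.

End Main.

Section Bnd.
Variables (R : realType) (n : nat).
Local Notation P := {mpoly R[n]}.

Definition Bnd (f : 'I_n -> nat) (p : P) :=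
  forall e : 'X_{1..n}, p@_e != 0 -> forall i, (e i <= f i)%N.

Lemma Bnd_mono f g p : Bnd f p -> (forall i, f i <= g i)%N -> Bnd g p.
Proof. by move=> h le e /h he i; apply: leq_trans (he i) (le i). Qed.

Lemma Bnd1 f : Bnd f 1.
Proof.
move=> e; rewrite mcoeff1; case: (eqVneq e 0%MM) => [-> _ i|ne]; first by rewrite mnm0E.
by rewrite eqxx.
Qed.

Lemma Bnd_mul f g p q : Bnd f p -> Bnd g q -> Bnd (fun i => f i + g i)%N (p * q).
Proof.
move=> hp hq e nz i; rewrite leqNgt; apply/negP => lt; case/negP: nz; apply/eqP.
rewrite mcoeffM big1 // => kk /eqP ek.
case: (eqVneq (p@_kk.1) 0) => [->|nz1]; first by rewrite mul0r.
case: (eqVneq (q@_kk.2) 0) => [->|nz2]; first by rewrite mulr0.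
exfalso; move: lt; rewrite ek mnmDE.
move=> lt2; have := leq_add (hp _ nz1 i) (hq _ nz2 i); by rewrite leqNgt lt2.
Qed.

Lemma Bnd_exp f p a : Bnd f p -> Bnd (fun i => a * f i)%N (p ^+ a).
Proof.
move=> h; elim: a => [|a ih]; first by rewrite expr0; apply: Bnd_mono (Bnd1 (fun=> 0%N)) _.
rewrite exprS; apply: Bnd_mono (Bnd_mul h ih) _ => i; by rewrite mulSn.
Qed.

Lemma Bnd_prod (I : Type) (s : seq I) (f : I -> 'I_n -> nat) (p : I -> P) :
  (forall x, Bnd (f x) (p x)) -> Bnd (fun i => \sum_(x <- s) f x i)%N (\prod_(x <- s) p x).
Proof.
move=> h; elim: s => [|x s ih]; first by rewrite big_nil; apply: Bnd_mono (Bnd1 (fun=> 0%N)) _.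
rewrite big_cons; apply: Bnd_mono (Bnd_mul (h x) ih) _ => i; by rewrite big_cons.
Qed.

Lemma Bnd_prodF (I : finType) (f : I -> 'I_n -> nat) (p : I -> P) :
  (forall x, Bnd (f x) (p x)) -> Bnd (fun i => \sum_x f x i)%N (\prod_x p x).
Proof.
move=> h; have := Bnd_prod (s := enum I) h; rewrite big_enum /=.
by move=> H; apply: Bnd_mono H _ => i; rewrite big_enum.
Qed.

Lemma Bnd_lin i (c : R) : Bnd (fun l => (i == l) : nat) ('X_i - c%:MP).
Proof.
move=> e; rewrite mcoeffB mcoeffX mcoeffC.
case: (eqVneq U_(i)%MM e) => [<- _ l|ne]; first by rewrite mnm1E.
case: (eqVneq e 0%MM) => [-> _ l|ne0]; first by rewrite mnm0E.
by rewrite mulr0 subr0 eqxx.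
Qed.

Lemma Bnd_X (r : 'X_{1..n}) : Bnd (fun i => r i) ('X_[r] : P).
Proof.
move=> e; rewrite mcoeffX; case: (eqVneq r e) => [-> _ i //|ne].
by rewrite eqxx.
Qed.

Variable (m : nat).

Lemma Bnd_gg i : Bnd (fun l => (i == l) * m.+1)%N (gg R m i).
Proof.
rewrite /gg; apply: (Bnd_mono (Bnd_prodF (fun a : 'I_m.+1 => Bnd_lin (i := i) (c := (a : nat)%:R)))) => l.
by rewrite sum_nat_const card_ord mulnC.
Qed.

Lemma Bnd_GG (q : 'X_{1..n}) : Bnd (fun l => q l * m.+1)%N (GG R m q).
Proof.
rewrite /GG.
apply: (Bnd_mono (Bnd_prodF (fun i => Bnd_exp (a := q i) (Bnd_gg (i := i))))) => l.
rewrite (bigD1 l) //= eqxx mul1n big1 ?addn0 // => x hx.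
by rewrite (negbTE hx) mul0n muln0.
Qed.

End Bnd.

Lemma sum_count (T : finType) (s : seq T) : (\sum_(i : T) count_mem i s)%N = size s.
Proof.
elim: s => [|x s ih]; first by rewrite big1.
rewrite /= big_split /= ih (bigD1 x) //= eqxx big1 ?addn0 // => i hi.
by rewrite eq_sym (negbTE hi).
Qed.

Section Red.
Variables (R : realType) (n m k : nat).
Local Notation T := (point n m * midx n k)%type.
Local Notation D := (psi_dom n m k).
Local Notation P := {mpoly R[n]}.

Lemma sum_pt_le (r : point n m) : (\sum_i (r i : nat) <= n * m)%N.
Proof.
apply: (@leq_trans (\sum_(i < n) m)); first by apply: leq_sum => i _; rewrite -ltnS.
by rewrite sum_nat_const card_ord.
Qed.

Lemma sum_pt_lt (r : point n m) : r != top n m -> (\sum_i (r i : nat) < n * m)%N.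
Proof.
move=> ne; have [i hi] : exists i, r i != ord_max.
  apply/existsP; apply: contraR ne => /existsPn h; apply/eqP/ffunP => i.
  by have := h i; rewrite negbK ffunE => /eqP.
have lti : (r i < m)%N.
  by have := ltn_ord (r i); rewrite ltnS leq_eqVlt; case/orP => // /eqP e; case/eqP: hi; apply: val_inj.
rewrite (bigD1 i) //=.
have : (\sum_(l | l != i) (r l : nat) <= (n.-1) * m)%N.
  apply: (@leq_trans (\sum_(l | l != i) m)); first by apply: leq_sum => l _; rewrite -ltnS.
  by rewrite sum_nat_const cardC1 card_ord.
have n0 : (0 < n)%N by apply: leq_ltn_trans (leq0n i) (ltn_ord i).
have e : (n * m = m + n.-1 * m)%N by rewrite -mulSn prednK.
by rewrite e => hs; rewrite -addSn; apply: leq_add.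
Qed.

Lemma sw_eq_top (x : point n m) : (sw x == top n m) = (x == origin n m).
Proof.
apply/eqP/eqP => [e|->]; last by rewrite /sw eqxx.
by rewrite -(swK x) e sw_top.
Qed.

Lemma bas_reduced u : u \in D -> reduced m k (bas R u).
Proof.
case: u => x j uD.
have hb : Bnd (fun i => (bmnm j i * m.+1 + sw x i)%N) (bas R (x, j)).
  apply: Bnd_mono (Bnd_mul (Bnd_GG (q := bmnm j)) (Bnd_X (r := mono (sw x)))) _ => i.
  by rewrite mnmE.
have jk := bmdeg j.
have rle : forall i, (sw x i <= m)%N by move=> i; rewrite -ltnS.
split => e; rewrite mcoeff_msupp => /hb he.
  have me : (mdeg e <= m.+1 * mdeg j + \sum_i (sw x i : nat))%N.
    rewrite mdegE; apply: (@leq_trans (\sum_i (bmnm j i * m.+1 + sw x i))%N).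
      by apply: leq_sum => i _; exact: he.
    by rewrite big_split /= mdegE -big_distrl /= mulnC.
  rewrite /deg_bound; move: uD; rewrite inE /= => /orP [xo|jl].
    have := sum_pt_lt (r := sw x); rewrite sw_eq_top (negbTE xo) => /(_ isT) lt.
    have : (m.+1 * mdeg j <= m.+1 * (k - 1))%N by rewrite leq_mul2l; lia.
    by move: me lt; rewrite [(n * m)%N]mulnC; lia.
  have := sum_pt_le (sw x) => le.
  have : (m.+1 * mdeg j + m.+1 <= m.+1 * (k - 1))%N by rewrite -mulnSr leq_mul2l; lia.
  by move: me le; rewrite [(n * m)%N]mulnC; lia.
move=> [s hs].
have cs : forall i, (count_mem i s <= bmnm j i)%N.
  move=> i; rewrite -ltnS -(ltn_pmul2r (ltn0Sn m)).
  apply: leq_ltn_trans (hs i) _; apply: leq_ltn_trans (he i) _.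
  by rewrite mulSn addnC ltn_add2r ltnS.
have : (\sum_i count_mem i s <= \sum_i bmnm j i)%N by apply: leq_sum => i _; exact: cs.
rewrite sum_count size_tuple -mdegE.
by rewrite leqNgt jk.
Qed.

End Red.

Section Assemble.
Variables (R : realType) (n m k : nat).
Local Notation T := (point n m * midx n k)%type.
Local Notation D := (psi_dom n m k).
Local Notation P := {mpoly R[n]}.

Lemma reduced0 : reduced m k (0 : P).
Proof. by split => e; rewrite mcoeff_msupp mcoeff0 eqxx. Qed.

Lemma reducedD (a : R) (P1 Q : P) :
  reduced m k P1 -> reduced m k Q -> reduced m k (a *: P1 + Q).
Proof.
move=> [P1a P1b] [Qa Qb]; split => e /msuppD_le; rewrite mem_cat => /orP [/msuppZ_le h|h].
- exact: P1a.
- exact: Qa.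
- exact: P1b.
- exact: Qb.
Qed.

Lemma psiD (a : R) (P1 Q : P) t :
  psi m k (a *: P1 + Q) t = a * psi m k P1 t + psi m k Q t.
Proof. by rewrite /psi mderivmD mderivmZ mevalD mevalZ. Qed.

Lemma psi0 t : psi m k (0 : P) t = 0.
Proof. by rewrite /psi raddf0 meval0. Qed.

Lemma psi_sum (B : T -> P) (c : T -> R) v :
  psi m k (\sum_(u in D) c u *: B u) v = \sum_(u in D) psi m k (B u) v * c u.
Proof.
elim/big_rec2: _ => [|u y p _ <-]; first exact: psi0.
by rewrite psiD mulrC.
Qed.

Lemma reduced_sum (B : T -> P) (c : T -> R) :
  (forall u, u \in D -> reduced m k (B u)) -> reduced m k (\sum_(u in D) c u *: B u).
Proof.
move=> hB; elim/big_rec: _ => [|u p uD hp]; first exact: reduced0.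
by apply: reducedD => //; apply: hB.
Qed.

Lemma exists_P (f : T -> R) :
  exists P1 : P, reduced m k P1 /\ forall t, t \in D -> psi m k P1 t = f t.
Proof.
have [c hc] := sqD_inj_surj (A := fun v u => psi m k (bas R u) v) (@phi_inj R n m k) f.
exists (\sum_(u in D) c u *: bas R u); split.
  by apply: reduced_sum => u; apply: bas_reduced.
by move=> t tD; rewrite psi_sum hc.
Qed.

End Assemble.

Section Uniq.
Variables (R : realType) (n m k : nat).
Local Notation T := (point n m * midx n k)%type.
Local Notation D := (psi_dom n m k).
Local Notation P := {mpoly R[n]}.

Definition eps (u : T) : 'X_{1..n} :=
  [multinom (bmnm u.2 i * m.+1 + sw u.1 i)%N | i < n].

Lemma eps_inj : injective eps.
Proof.
move=> [x1 j1] [x2 j2] /= /mnmP e.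
have h : forall i, bmnm j1 i = bmnm j2 i /\ (sw x1 i : nat) = sw x2 i.
  move=> i; have := e i; rewrite !mnmE => ei.
  have d1 := congr1 (fun a => a %/ m.+1)%N ei; have d2 := congr1 (fun a => a %% m.+1)%N ei.
  move: d1 d2; rewrite /= !divnMDl // !modnMDl !divn_small ?modn_small // !addn0.
  by move=> -> ->.
congr (_, _).
  apply: (inv_inj (@swK n m)); apply/ffunP => i; apply: val_inj; exact: (h i).2.
by apply: val_inj; apply/mnmP => i; exact: (h i).1.
Qed.

Lemma decomp (Q : P) e : (2 <= k)%N -> reduced m k Q -> e \in msupp Q ->
  exists2 u, u \in D & eps u = e.
Proof.
move=> k2 [hdeg hnd] eQ.
have de := hdeg e eQ; have nd := hnd e eQ.
pose j := [multinom (e i %/ m.+1)%N | i < n].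
have hj : (mdeg j < k)%N.
  rewrite ltnNge; apply/negP => kj; apply: nd.
  pose fl := flatten [seq nseq (j l) l | l <- enum 'I_n].
  have sfl : size fl = mdeg j.
    by rewrite -sum_count mdegE; apply: eq_bigr => i _; rewrite count_seqj.
  have sz : size (take k fl) == k by rewrite size_takel // sfl.
  exists (Tuple sz) => i /=.
  apply: leq_trans (_ : j i * m.+1 <= _)%N.
    rewrite leq_mul2r; apply/orP; right.
    rewrite -(count_seqj j i) -/fl -{2}(cat_take_drop k fl) count_cat.
    exact: leq_addr.
  by rewrite mnmE leq_trunc_div.
pose rr : point n m := [ffun i => inord (e i %% m.+1)].
exists (sw rr, BMultinom hj).
  rewrite inE /=; apply/orP; case: (eqVneq (sw rr) (origin n m)) => [so|]; [right|by left].
  have rt : rr = top n m by rewrite -(swK rr) so /sw eqxx.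
  have em : forall i, e i = (j i * m.+1 + m)%N.
    move=> i; rewrite mnmE {1}(divn_eq (e i) m.+1); congr (_ + _)%N.
    have := congr1 (fun f : point n m => (f i : nat)) rt.
    by rewrite /= !ffunE /= inordK // ltn_pmod.
  have : (mdeg e = mdeg j * m.+1 + n * m)%N.
    rewrite !mdegE (eq_bigr _ (fun i _ => em i)) big_split /= big_distrl /=.
    by rewrite sum_nat_const card_ord mulnC.
  move: de; rewrite /deg_bound => de me.
  rewrite ltnNge; apply/negP => kj.
  have : (m.+1 * (k - 1) <= mdeg j * m.+1)%N by rewrite mulnC leq_mul2r; lia.
  by move: de me; rewrite [(n * m)%N]mulnC; lia.
apply/mnmP => i; rewrite mnmE /= swK ffunE inordK ?ltn_pmod //.
by rewrite mnmE -divn_eq.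
Qed.

Lemma expand (Q : P) : (2 <= k)%N -> reduced m k Q ->
  Q = \sum_(u in D) Q@_(eps u) *: 'X_[eps u].
Proof.
move=> k2 hQ; apply/mpolyP => e.
rewrite raddf_sum /=.
under eq_bigr do rewrite mcoeffZ mcoeffX.
case: (boolP [exists u in D, eps u == e]) => [/existsP [u /andP [uD /eqP ue]]| ne].
  rewrite (bigD1 u) //= ue eqxx mulr1 big1 ?addr0 // => v /andP [vD vu].
  by rewrite -ue (inj_eq eps_inj) (negbTE vu) mulr0.
rewrite big1 => [|u uD]; last first.
  case: (eqVneq (eps u) e) => [ue|]; last by rewrite mulr0.
  by case/existsP: ne; exists u; rewrite uD ue eqxx.
apply/eqP; apply: contraR ne; rewrite -mcoeff_msupp => /(decomp k2 hQ) [u uD ue].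
by apply/existsP; exists u; rewrite uD ue eqxx.
Qed.

Lemma uniq_P (P1 P2 : P) : (2 <= k)%N -> reduced m k P1 -> reduced m k P2 ->
  (forall t, t \in D -> psi m k P1 t = psi m k P2 t) -> P1 = P2.
Proof.
move=> k2 r1 r2 h.
have inj := @sqD_surj_inj R T D (fun v u => psi m k ('X_[eps u] : P) v).
have surj : forall f : T -> R, exists c : T -> R,
    forall i, i \in D -> \sum_(j in D) psi m k ('X_[eps j] : P) i * c j = f i.
  move=> f; have [P0 [r0 h0]] := exists_P f; exists (fun u => P0@_(eps u)) => v vD.
  by rewrite -h0 // -psi_sum -(expand k2 r0).
set Q := (-1) *: P2 + P1; have rQ : reduced m k Q by apply: reducedD.
have cQ := inj surj (fun u => Q@_(eps u)).
have Q0 : Q = 0.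
  rewrite (expand k2 rQ) big1 // => u uD; rewrite cQ ?scale0r // => v vD.
  by rewrite -psi_sum -(expand k2 rQ) /Q psiD h // mulN1r addNr.
move: Q0 => /eqP; rewrite /Q scaleN1r addrC subr_eq0 => /eqP.
by [].
Qed.

End Uniq.

Lemma hockey n c : (\sum_(y < c.+1) 'C(n + y, n))%N = 'C(n + c.+1, n.+1).
Proof.
elim: c => [|c ih]; first by rewrite big_ord1 addn0 addn1 !binn.
by rewrite big_ord_recr /= ih [in RHS]addnS binS addnC.
Qed.

Section Count.
Variable B : nat.

Definition sv n (t : n.-tuple 'I_B) : nat := sumn (map (fun x : 'I_B => x : nat) t).

Lemma sum_tuple_cons n (G : n.+1.-tuple 'I_B -> nat) :
  (\sum_t G t = \sum_(x : 'I_B) \sum_(t : n.-tuple 'I_B) G [tuple of x :: t])%N.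
Proof.
rewrite pair_bigA /=.
rewrite (reindex (fun p : 'I_B * n.-tuple 'I_B => [tuple of p.1 :: p.2])) //=.
apply: onW_bij; exists (fun t => (thead t, [tuple of behead t])).
  by case=> x t /=; rewrite theadE; congr pair; apply: val_inj.
by move=> t; rewrite -tuple_eta.
Qed.

Lemma cntT n c : (c < B)%N ->
  (\sum_(t : n.-tuple 'I_B) (sv t <= c : nat))%N = 'C(n + c, n).
Proof.
elim: n c => [|n ih] c cB.
  rewrite (eq_bigr (fun _ => 1%N)) => [|t _]; last by rewrite tuple0.
  by rewrite sum1_card card_tuple expn0 bin0.
rewrite sum_tuple_cons.
transitivity (\sum_(x < B) (if (x <= c)%N then 'C(n + (c - x), n) else 0%N))%N.
  apply: eq_bigr => x _; case: ifP => xc.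
    rewrite -ih; last by apply: leq_ltn_trans (leq_subr _ _) cB.
    by apply: eq_bigr => t _; rewrite /sv /= leq_subRL.
  rewrite big1 // => t _; rewrite /sv /=.
  by case: leqP => // h; move: xc; rewrite (leq_trans (leq_addr _ _) h).
rewrite -(big_mkord xpredT (fun x => if (x <= c)%N then 'C(n + (c - x), n) else 0%N)).
rewrite (big_cat_nat _ (n := c.+1)) //= [X in (_ + X)%N]big_nat_cond [X in (_ + X)%N]big1 ?addn0; last first.
  by move=> i /andP [/andP [ci _] _]; rewrite leqNgt ci.
rewrite big_nat_cond (eq_bigr (fun x => 'C(n + (c - x), n))); last first.
  by move=> i /andP [/andP [_ ic] _]; rewrite -ltnS ic.
rewrite -big_nat_cond big_nat_rev /= add0n.
rewrite big_nat_cond (eq_bigr (fun y => 'C(n + y, n))); last first.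
  by move=> i /andP [/andP [_ ic] _]; rewrite subSS subKn // -ltnS.
by rewrite -big_nat_cond big_mkord hockey addSnnS.
Qed.

End Count.

Lemma card_midx_le n b c : (c <= b)%N ->
  #|[set j : 'X_{1..n < b.+1} | (mdeg j <= c)%N]| = 'C(n + c, n).
Proof.
move=> cb.
pose h := fun j : 'X_{1..n < b.+1} => [tuple (inord (bmnm j i) : 'I_b.+1) | i < n].
have jle : forall (j : 'X_{1..n < b.+1}) i, (bmnm j i <= b)%N.
  move=> j i; rewrite -ltnS; apply: leq_ltn_trans (bmdeg j).
  by rewrite mdegE (bigD1 i) //= leq_addr.
have hv : forall j i, (tnth (h j) i : nat) = bmnm j i.
  by move=> j i; rewrite tnth_mktuple inordK // ltnS.
have svE : forall t : n.-tuple 'I_b.+1, sv t = (\sum_i (tnth t i : nat))%N.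
  by move=> t; rewrite /sv sumnE big_map big_tuple.
have svh : forall j, sv (h j) = mdeg j.
  by move=> j; rewrite svE mdegE; apply: eq_bigr => i _; rewrite hv.
rewrite -(card_in_imset (f := h)); last first.
  move=> j1 j2 _ _ e; apply: val_inj; apply/mnmP => i.
  by rewrite -!hv e.
transitivity #|[set t : n.-tuple 'I_b.+1 | (sv t <= c)%N]|.
  apply: eq_card => t; rewrite [in RHS]inE; apply/imsetP/idP.
    by move=> [j]; rewrite inE => jc ->; rewrite svh.
  move=> tc; pose j0 := [multinom (tnth t i : nat) | i < n].
  have mj0 : mdeg j0 = sv t by rewrite svE mdegE; apply: eq_bigr => i _; rewrite mnmE.
  have lt : (mdeg j0 < b.+1)%N by rewrite mj0 ltnS (leq_trans tc cb).
  exists (BMultinom lt); first by rewrite inE /= mj0.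
  by apply: eq_from_tnth => i; rewrite tnth_mktuple /= mnmE inord_val.
rewrite -(cntT n (B := b.+1)) ?ltnS // -sum1_card big_mkcond /=.
by apply: eq_bigr => t _; rewrite inE; case: ifP.
Qed.

Lemma card_dom n m k : (2 <= k)%N -> #|psi_dom n m k| = Nsize n m k.
Proof.
case: k => [|[|b]] // _.
have call : (\sum_(j : midx n b.+2) 1)%N = 'C(n + b.+1, n).
  rewrite -(card_midx_le n (leqnn b.+1)) -sum1_card [RHS]big_mkcond /=.
  by apply: eq_bigr => j _; rewrite inE -ltnS bmdeg.
transitivity (\sum_(x : point n m) \sum_(j : midx n b.+2)
    (((x, j) \in psi_dom n m b.+2) : nat))%N.
  by rewrite -sum1_card big_mkcond pair_bigA /=; apply: eq_bigr => -[x j] _.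
rewrite (bigD1 (origin n m)) //=.
have -> : (\sum_(j : midx n b.+2) (((origin n m, j) \in psi_dom n m b.+2) : nat))%N
    = 'C(n + b, n).
  rewrite -(@card_midx_le n b.+1 b) // -sum1_card [RHS]big_mkcond /=.
  by apply: eq_bigr => j _; rewrite !inE /= eqxx /= ltnS.
rewrite (eq_bigr (fun _ => 'C(n + b.+1, n))); last first.
  move=> x xo; rewrite -call.
  by apply: eq_bigr => j _; rewrite inE /= xo.
rewrite sum_nat_const cardC1 card_ffun !card_ord.
rewrite /Nsize /Mk addnC; congr (_ + _)%N.
  by rewrite !subn1 !addnS.
by rewrite /= !addnS subn1.
Qed.

Unset Implicit Arguments.

Theorem lemma3p3 (R : realType) (n m k : nat) :
  (1 <= n)%N -> (1 <= m)%N -> (2 <= k)%N ->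
  #|psi_dom n m k| = Nsize n m k /\
  (reduced m k (0 : {mpoly R[n]}) /\
   forall (a : R) (P Q : {mpoly R[n]}), reduced m k P -> reduced m k Q ->
     reduced m k (a *: P + Q) /\
     forall t, psi m k (a *: P + Q) t = a * psi m k P t + psi m k Q t) /\
  (forall g : point n m * midx n k -> R,
     exists! P : {mpoly R[n]},
       reduced m k P /\ forall t, t \in psi_dom n m k -> psi m k P t = g t).
Proof.
move=> _ _ hk; split; first exact: card_dom.
split.
  split; first exact: reduced0.
  move=> a P Q rP rQ; split; first exact: reducedD.
  by move=> t; apply: psiD.
move=> g; have [P [rP hP]] := exists_P g.
exists P; split; first by split.
move=> P' [rP' hP']; apply: uniq_P hk rP rP' _ => t tD.
by rewrite hP // hP'.
Qed.
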